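(* Let $p$ be a prime and $F$ a field of characteristic $p$. Let $L\in F[x]$ be a $p$-polynomial of $p$-degree $n$ with no repeated roots, let $E$ be a splitting field of $L$ over $F$, let $V_L\subseteq E$ be the $\mathbb{F}_p$-space of roots of $L$, and let $G$ be the Galois group of $E$ over $F$ (acting $\mathbb{F}_p$-linearly on $V_L$). Let $r$ be a positive divisor of $p-1$ and suppose that the $r$-th symmetric power $\mathrm{Sym}^r(V_L)$ (over $\mathbb{F}_p$, with the induced $G$-action) is an irreducible $\mathbb{F}_pG$-module. Let $P(x)\in F[x]$ be defined by $L(x)/x=P(x^r)$ and let $L_P\in F[x]$ be a $p$-linearized polynomial of smallest degree divisible by $P$. Then $\mathrm{Sym}^r(V_L)$ is isomorphic to the space of roots of $L_P$.
   Context: A $p$-polynomial of $p$-degree $n$ is $\sum_{i=0}^n a_ix^{p^i}$ with $a_n\neq0$. *)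

(* Defs.v *)
From HB Require Import structures.
From mathcomp Require Import all_boot all_order all_algebra all_field.
From mathcomp Require Import mpoly.
Set Implicit Arguments. Unset Strict Implicit. Unset Printing Implicit Defensive.
Import GRing.Theory.
Local Open Scope ring_scope.

Definition is_ppoly {R : nzRingType} (p : nat) (Q : {poly R}) : Prop :=
  forall i : nat, Q`_i != 0 -> exists k : nat, i = (p ^ k)%N.

Definition is_ppoly_of_pdeg {R : nzRingType} (p n : nat) (Q : {poly R}) : Prop :=
  is_ppoly p Q /\ size Q = (p ^ n).+1.

Definition Fp_to {p : nat} {R : nzRingType} (c : 'F_p) : R := (nat_of_ord c)%:R.

Definition Fp_lincomb {p n : nat} {E : nzRingType} (b : 'I_n -> E)
  (c : {ffun 'I_n -> 'F_p}) : E := \sum_(i < n) Fp_to (c i) * b i.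

Definition is_Fp_basis {p n : nat} {E : nzRingType} (b : 'I_n -> E) (V : pred E) : Prop :=
  [/\ forall c : {ffun 'I_n -> 'F_p}, V (Fp_lincomb (p:=p) b c),
      injective (Fp_lincomb (p:=p) b) &
      forall v, V v -> exists c, Fp_lincomb (p:=p) b c = v].

(* F_p-coordinates of x in the family b (meaningful when x is in the span). *)
Definition Fp_coord {p n : nat} {E : nzRingType} (b : 'I_n -> E) (x : E) : {ffun 'I_n -> 'F_p} :=
  odflt 0 [pick c : {ffun 'I_n -> 'F_p} | Fp_lincomb (p:=p) b c == x].

(* Sym(V) = F_p[X_0,...,X_(n-1)], X_i standing for the basis vector b_i;
   an additive map g : E -> E preserving V acts by X_j |-> sum_i c_ij X_i
   where g(b_j) = sum_i c_ij b_i, extended as an algebra morphism. *)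
Definition sym_act {p n : nat} {E : nzRingType} (b : 'I_n -> E) (g : E -> E)
  (m : {mpoly 'F_p[n]}) : {mpoly 'F_p[n]} :=
  comp_mpoly [tuple \sum_(i < n) (Fp_coord (p:=p) b (g (b j)) i)%:MP_[n] * 'X_i | j < n] m.

Definition SymPow {p n : nat} (r : nat) : pred {mpoly 'F_p[n]} :=
  fun m => m \is r.-homog.

Definition sym_irreducible {p n : nat} {E : nzRingType} (b : 'I_n -> E)
  (G : (E -> E) -> Prop) (r : nat) : Prop :=
  (exists2 m, SymPow (p:=p) (n:=n) r m & m != 0) /\
  forall U : pred {mpoly 'F_p[n]},
    (forall m, U m -> SymPow r m) -> U 0 ->
    (forall m1 m2, U m1 -> U m2 -> U (m1 + m2)) ->
    (forall (c : 'F_p) m, U m -> U (c *: m)) ->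
    (forall g m, G g -> U m -> U (sym_act b g m)) ->
    (forall m, U m -> m = 0) \/ (forall m, SymPow r m -> U m).

Definition sym_iso_to {p n : nat} {E : nzRingType} (b : 'I_n -> E)
  (G : (E -> E) -> Prop) (r : nat) (W : pred E) : Prop :=
  exists f : {mpoly 'F_p[n]} -> E,
    [/\ forall m1 m2, SymPow (p:=p) r m1 -> SymPow r m2 -> f (m1 + m2) = f m1 + f m2,
        forall (c : 'F_p) m, SymPow r m -> f (c *: m) = Fp_to c * f m,
        forall m1 m2, SymPow r m1 -> SymPow r m2 -> f m1 = f m2 -> m1 = m2,
        forall x, W x <-> exists2 m, SymPow r m & f m = x &
        forall g m, G g -> SymPow r m -> f (sym_act b g m) = g (f m)].

(* Main.v *)
Require Import Defs.
From HB Require Import structures.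
From mathcomp Require Import all_boot all_order all_algebra all_field.
From mathcomp Require Import mpoly.
Import GRing.Theory.
Local Open Scope ring_scope.
Section Fp.
Variables (p : nat) (F : fieldType) (R : splittingFieldType F).
Hypotheses (pP : prime p) (chR : p \in [pchar R]).

Definition fpE (c : 'F_p) : R := Fp_to c.
Lemma natr_modq a : ((a %% (Zp_trunc (pdiv p)).+2)%N%:R : R) = a%:R.
Proof. by rewrite Fp_cast // (GRing.natr_mod_pchar chR). Qed.
Lemma fpE_add : {morph fpE : x y / x + y}.
Proof. by move=> x y; rewrite /fpE /Fp_to /= natr_modq natrD. Qed.
Lemma fpE_mul : {morph fpE : x y / x * y}.
Proof. by move=> x y; rewrite /fpE /Fp_to /= natr_modq natrM. Qed.
Lemma fpE_1 : fpE 1 = 1.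
Proof. by rewrite /fpE /Fp_to /= natr_modq. Qed.
Lemma fpE_0 : fpE 0 = 0.
Proof. by rewrite /fpE /Fp_to /=. Qed.
Lemma fpE_opp : {morph fpE : x / - x}.
Proof. by move=> x; apply: (addrI (fpE x)); rewrite -fpE_add !subrr fpE_0. Qed.
HB.instance Definition _ := GRing.isZmodMorphism.Build _ _ fpE (fun x y => etrans (fpE_add x (-y)) (congr1 _ (fpE_opp y))).
HB.instance Definition _ := GRing.isMonoidMorphism.Build _ _ fpE (conj fpE_1 fpE_mul).

Lemma pk_char k : [pchar R].-nat (p ^ k)%N.
Proof.
rewrite pnatX; apply/orP; left.
by rewrite pnatE.
Qed.

Lemma fpE_pk c k : fpE c ^+ (p ^ k)%N = fpE c.
Proof.
elim: k => [|k IH]; first by rewrite expr1.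
by rewrite expnSr exprM IH -rmorphXn /= -{2}(card_Fp pP) expf_card.
Qed.

Lemma opp_pk (z : R) k : (- z) ^+ (p ^ k)%N = - (z ^+ (p ^ k)%N).
Proof.
by rewrite exprNn_pchar ?pk_char.
Qed.

Lemma ppoly_add (Q1 Q2 : {poly R}) : is_ppoly p Q1 -> is_ppoly p Q2 -> is_ppoly p (Q1 + Q2).
Proof.
move=> h1 h2 i; rewrite coefD; case: (eqVneq Q1`_i 0) => [->|/h1//].
by rewrite add0r; exact: h2.
Qed.
Lemma ppoly_scale a (Q : {poly R}) : is_ppoly p Q -> is_ppoly p (a *: Q).
Proof.
move=> h i; rewrite coefZ; case: (eqVneq Q`_i 0)=> [->|/h//].
by rewrite mulr0 eqxx.
Qed.
Lemma ppoly_opp {Q : {poly R}} : is_ppoly p Q -> is_ppoly p (- Q).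
Proof. by move=> h; rewrite -scaleN1r; apply: ppoly_scale. Qed.
Lemma ppoly_X : is_ppoly p ('X : {poly R}).
Proof.
move=> i; rewrite coefX; case: i => [|[|i]] /=; [by rewrite eqxx | by exists 0%N | by rewrite eqxx].
Qed.
Lemma ppoly_coef0 {Q : {poly R}} : is_ppoly p Q -> Q`_0 = 0.
Proof.
move=> h; apply/eqP; apply/negP => /negP /h [k /esym/eqP].
by rewrite expn_eq0 => /andP [/eqP p0 _]; have := pP; rewrite p0.
Qed.
Lemma ppoly_hornerD (Q : {poly R}) x y : is_ppoly p Q -> Q.[x + y] = Q.[x] + Q.[y].
Proof.
move=> h; rewrite !horner_coef -big_split; apply: eq_bigr => i _ /=.
case: (eqVneq Q`_i 0) => [->|/h [k ->]]; first by rewrite !mul0r addr0.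
by rewrite exprDn_pchar ?mulrDr // pk_char.
Qed.
Lemma ppoly_horner_fp {Q : {poly R}} c x : is_ppoly p Q -> Q.[fpE c * x] = fpE c * Q.[x].
Proof.
move=> h; rewrite !horner_coef mulr_sumr; apply: eq_bigr => i _ /=.
case: (eqVneq Q`_i 0) => [->|/h [k ->]]; first by rewrite !mul0r mulr0.
by rewrite exprMn fpE_pk mulrCA.
Qed.
Lemma ppoly_horner0 {Q : {poly R}} : is_ppoly p Q -> Q.[0] = 0.
Proof. by move=> h; rewrite horner_coef0 ppoly_coef0. Qed.

Lemma pchar_polyR : p \in [pchar {poly R}].
Proof. by rewrite pchar_poly. Qed.

Lemma ppoly_exp {Q : {poly R}} : is_ppoly p Q -> is_ppoly p (Q ^+ p).
Proof.
move=> h j.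
have -> : Q ^+ p = \sum_(i < size Q) (Q`_i ^+ p) *: 'X^(i * p).
  rewrite -{1}[Q]coefK poly_def.
  have fr := GRing.pFrobenius_autE pchar_polyR.
  rewrite -fr rmorph_sum /=; apply: eq_bigr => i _.
  by rewrite fr exprZn -exprM.
rewrite coef_sum => nz.
case: (boolP [exists k : 'I_j.+1, j == (p ^ k)%N]) => [/existsP [k /eqP ->]|]; first by exists k.
move=> /existsPn hn; case/eqP: nz; apply: big1 => i _.
rewrite coefZ coefXn; case: (eqVneq Q`_i 0) => [->|/h [k ik]].
  by rewrite expr0n eqn0Ngt prime_gt0 //= mul0r.
case: eqP => [jE|]; last by rewrite mulr0.
have kj : (k.+1 < j.+1)%N.
  by rewrite ltnS jE ik -expnSr ltnW // ltn_expl // prime_gt1.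
have := hn (Ordinal kj); rewrite /= expnSr -ik -jE.
by rewrite eqxx.
Qed.

Lemma ppoly_comp_sub {Q : {poly R}} a : is_ppoly p Q -> Q \Po ('X - a%:P) = Q - (Q.[a])%:P.
Proof.
move=> h; transitivity (\sum_(i < size Q) Q`_i *: 'X^i - (Q.[a])%:P); last first.
  by rewrite -poly_def coefK.
rewrite comp_polyE horner_coef rmorph_sum /= -sumrB; apply: eq_bigr => i _.
case: (eqVneq Q`_i 0) => [->|/h [k ->]]; first by rewrite !scale0r mul0r subr0.
have hk : [pchar {poly R}].-nat (p ^ k)%N.
  by apply: sub_in_pnat (pk_char k) => q _; rewrite pchar_poly.
by rewrite exprDn_pchar // exprNn_pchar // -polyC_exp scalerDr polyCM mul_polyC scalerN.
Qed.
Lemma pm1_neq0 : (p.-1 != 0)%N.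
Proof. by rewrite -lt0n -ltnS prednK ?prime_gt0 // prime_gt1. Qed.

Lemma prod_Fp (Y : {poly R}) (a : R) :
  \prod_(c : 'F_p) (Y - (fpE c * a)%:P) = Y ^+ p - (a ^+ p.-1) *: Y.
Proof.
have G : 'X^p - 'X = \prod_(c : 'F_p) ('X - (fpE c)%:P) :> {poly R}.
  have := congr1 (map_poly fpE) (finField_genPoly 'F_p).
  rewrite rmorphB /= map_polyXn map_polyX rmorph_prod /= card_Fp // => ->.
  by apply: eq_bigr => c _; rewrite map_polyXsubC.
case: (eqVneq a 0) => [->|a0].
  rewrite expr0n (negbTE pm1_neq0) scale0r subr0.
  under eq_bigr do rewrite mulr0 subr0.
  by rewrite prodr_const card_Fp.
set Z := a^-1 *: Y.
have := congr1 (comp_poly Z) G.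
rewrite comp_polyB comp_Xn_poly comp_polyX rmorph_prod /=.
under eq_bigr do rewrite comp_polyB comp_polyX comp_polyC.
move=> HZ.
have -> : Y ^+ p - a ^+ p.-1 *: Y = a ^+ p *: (Z ^+ p - Z).
  rewrite /Z exprZn scalerBr !scalerA -exprMn mulfV // expr1n scale1r.
  congr (_ - _ *: _).
  by rewrite -[in RHS](prednK (prime_gt0 pP)) exprS mulrAC mulfV // mul1r.
have e : a ^+ p = a ^+ #|'F_p| by rewrite card_Fp.
rewrite HZ e -scaler_prodl; apply: eq_bigr => c _.
by rewrite /Z scalerBr scalerA mulfV // scale1r -mul_polyC -polyCM mulrC.
Qed.
Local Notation fp := fpE.

Definition spanS (xs : seq R) : seq R :=
  foldr (fun x S => [seq fp c * x + s | c <- enum 'F_p, s <- S]) [:: 0] xs.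

Lemma spanS_consP x xs w :
  reflect (exists c s, s \in spanS xs /\ w = fp c * x + s) (w \in spanS (x :: xs)).
Proof.
apply: (iffP allpairsP) => [[[c s] /= [_ hs ->]]|[c [s [hs ->]]]]; first by exists c, s.
by exists (c, s); rewrite mem_enum.
Qed.

Lemma spanS0 xs : 0 \in spanS xs.
Proof.
elim: xs => [|x xs IH]; first by rewrite inE.
by apply/spanS_consP; exists 0, 0; rewrite rmorph0 mul0r addr0.
Qed.

Lemma spanS_sub x xs s : s \in spanS xs -> s \in spanS (x :: xs).
Proof. by move=> hs; apply/spanS_consP; exists 0, s; rewrite rmorph0 mul0r add0r. Qed.

Lemma spanS_mem xs x : x \in xs -> x \in spanS xs.
Proof.
elim: xs => [//|y xs IH]; rewrite inE => /orP [/eqP ->|/IH]; last exact: spanS_sub.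
by apply/spanS_consP; exists 1, 0; rewrite spanS0 rmorph1 mul1r addr0.
Qed.

Lemma spanS_add {xs u v} : u \in spanS xs -> v \in spanS xs -> u + v \in spanS xs.
Proof.
elim: xs u v => [|x xs IH] u v; first by rewrite !inE => /eqP -> /eqP ->; rewrite addr0.
move=> /spanS_consP [c1 [s1 [h1 ->]]] /spanS_consP [c2 [s2 [h2 ->]]].
apply/spanS_consP; exists (c1 + c2), (s1 + s2); split; first exact: IH.
by rewrite rmorphD mulrDl addrACA.
Qed.

Lemma spanS_scale {xs} c {u} : u \in spanS xs -> fp c * u \in spanS xs.
Proof.
elim: xs u => [|x xs IH] u; first by rewrite !inE => /eqP ->; rewrite mulr0.
move=> /spanS_consP [c1 [s1 [h1 ->]]].
apply/spanS_consP; exists (c * c1), (fp c * s1); split; first exact: IH.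
by rewrite rmorphM mulrDr mulrA.
Qed.

Lemma spanS_min (U : R -> Prop) xs : U 0 -> (forall u v, U u -> U v -> U (u + v)) ->
  (forall c u, U u -> U (fp c * u)) -> (forall x, x \in xs -> U x) ->
  forall w, w \in spanS xs -> U w.
Proof.
move=> U0 UD UZ; elim: xs => [|x xs IH] sub w; first by rewrite inE => /eqP ->.
move=> /spanS_consP [c [s [hs ->]]]; apply: UD; first by apply: UZ; apply: sub; rewrite inE eqxx.
by apply: IH => // y yi; apply: sub; rewrite inE yi orbT.
Qed.

Lemma spanS_uniq x xs : uniq (spanS xs) -> x \notin spanS xs -> uniq (spanS (x :: xs)).
Proof.
move=> u nx; rewrite /= allpairs_uniq ?enum_uniq //.
move=> [c10 s10] [c20 s20] /allpairsP [[c1 t1] /= [_ ht1 [-> ->]]].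
move=> /allpairsP [[c2 t2] /= [_ ht2 [-> ->]]] /= E.
have ec : c1 = c2.
  apply/eqP; apply/negPn/negP => ne; case/negP: nx.
  have h : fp (c1 - c2) * x = t2 - t1.
    rewrite rmorphB /= mulrBl.
    transitivity ((fp c1 * x + t1) - (t1 + fp c2 * x)); first by rewrite addrKA.
    by rewrite E [t1 + _]addrC opprD addrACA subrr add0r.
  have := spanS_scale ((c1 - c2)^-1) (spanS_add ht2 (spanS_scale (-1) ht1)).
  rewrite rmorphN rmorph1 mulN1r -h mulrA -rmorphM mulVf ?subr_eq0 //.
  by rewrite rmorph1 mul1r.
by move: E; rewrite ec => /addrI ->.
Qed.

Definition QS xs : {poly R} := \prod_(w <- spanS xs) ('X - w%:P).

Lemma QS_ppoly xs : is_ppoly p (QS xs).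
Proof.
elim: xs => [|x xs IH]; first by rewrite /QS /= big_seq1 subr0; apply: ppoly_X.
rewrite /QS /= big_allpairs_dep /= big_enum /=.
rewrite (eq_bigr (fun c => QS xs - (fp c * (QS xs).[x])%:P)); last first.
  move=> c _; rewrite -ppoly_horner_fp // -ppoly_comp_sub //.
  rewrite /QS rmorph_prod /=; apply: eq_bigr => s _.
  by rewrite comp_polyB comp_polyX comp_polyC polyCD opprD addrA.
have -> : \prod_(i in 'F_p) (QS xs - (fp i * (QS xs).[x])%:P) =
          \prod_(i : 'F_p) (QS xs - (fp i * (QS xs).[x])%:P).
  by apply: eq_bigl => i; rewrite inE.
rewrite prod_Fp //; apply: ppoly_add; first exact: ppoly_exp.
by apply: ppoly_opp; apply: ppoly_scale.
Qed.

Fixpoint greedy (us : seq R) : seq R :=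
  if us is u :: us' then
    let xs := greedy us' in if u \in spanS xs then xs else u :: xs
  else [::].

Lemma greedy_uniq us : uniq (spanS (greedy us)).
Proof.
elim: us => [//|u us IH] /=; case: ifP => // /negbT; exact: spanS_uniq.
Qed.

Lemma greedy_span us : {subset us <= spanS (greedy us)}.
Proof.
elim: us => [//|u us IH] w; rewrite inE /= => /orP [/eqP ->|/IH]; case: ifP => //.
- by move=> _; apply: spanS_mem; rewrite inE eqxx.
- by move=> _; apply: spanS_sub.
Qed.

Lemma greedy_sub us : {subset greedy us <= us}.
Proof.
elim: us => [//|u us IH] w /=; case: ifP => _; first by move/IH; rewrite inE => ->; rewrite orbT.
by rewrite !inE => /orP [->//|/IH ->]; rewrite orbT.
Qed.
Section Main.
Variables (n r : nat) (L P LP : {poly F}) (b : 'I_n -> R).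
Local Notation Le := (map_poly (in_alg R) L).
Local Notation Gs := (fun g : R -> R =>
  exists2 s : gal_of {:R}, s \in ('Gal({:R} / 1%VS))%g & g =1 s).
Hypotheses (hLpd : is_ppoly_of_pdeg p n L) (hsep : separable_poly L)
  (hspl : splittingFieldFor 1%VS Le fullv)
  (hbas : is_Fp_basis (p:=p) b (fun x : R => root Le x))
  (hr : (0 < r)%N)
  (hirr : sym_irreducible (p:=p) b Gs r)
  (hLP : L = 'X * (P \Po 'X^r))
  (hLPp : is_ppoly p LP) (hLP0 : LP != 0) (hPLP : P %| LP)
  (hmin : forall Q : {poly F}, is_ppoly p Q -> Q != 0 -> P %| Q -> (size LP <= size Q)%N).

Definition ff (m : {mpoly 'F_p[n]}) : R := mmap fp b m.

Lemma ffD m1 m2 : ff (m1 + m2) = ff m1 + ff m2.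
Proof. exact: mmapD. Qed.
Lemma ffZ c m : ff (c *: m) = fp c * ff m.
Proof. exact: mmapZ. Qed.
Lemma ffX i : ff 'X_i = b i.
Proof. by rewrite /ff mmapX mmap1U. Qed.
Lemma ffM m1 m2 : ff (m1 * m2) = ff m1 * ff m2.
Proof. exact: rmorphM. Qed.
Lemma ffXn i k : ff ('X_i ^+ k) = b i ^+ k.
Proof. by rewrite /ff rmorphXn /= -/(ff _) ffX. Qed.
Lemma ffC c : ff c%:MP = fp c.
Proof. exact: mmapC. Qed.
Lemma ff0 : ff 0 = 0.
Proof. exact: mmap0. Qed.

Lemma gal_fix_alg (s : gal_of {:R}) (a : F) : s (in_alg R a) = in_alg R a.
Proof. by rewrite /= -[a%:A]/(a *: 1) linearZ /= rmorph1. Qed.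

Lemma gal_fix_fp (s : gal_of {:R}) c : s (fp c) = fp c.
Proof. by rewrite /fpE /Fp_to rmorph_nat. Qed.

Lemma gal_map (s : gal_of {:R}) (Q : {poly F}) :
  map_poly s (map_poly (in_alg R) Q) = map_poly (in_alg R) Q.
Proof.
by rewrite -map_poly_comp; apply: eq_map_poly => a /=; rewrite gal_fix_alg.
Qed.

Lemma gal_root (s : gal_of {:R}) (Q : {poly F}) x :
  root (map_poly (in_alg R) Q) x -> root (map_poly (in_alg R) Q) (s x).
Proof.
by move=> /eqP h; apply/eqP; rewrite -(gal_map s) horner_map h rmorph0.
Qed.

Lemma lincomb0 : Fp_lincomb (p:=p) b 0 = 0.
Proof. by rewrite /Fp_lincomb big1 // => i _; rewrite ffunE -[Fp_to _]/(fp 0) rmorph0 mul0r. Qed.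

Lemma coordK v : root Le v -> Fp_lincomb (p:=p) b (Fp_coord (p:=p) b v) = v.
Proof.
move=> hv; rewrite /Fp_coord; case: pickP => [c /eqP //|none].
have [_ _ h3] := hbas; have [c hc] := h3 v hv.
by have := none c; rewrite hc eqxx.
Qed.

Lemma b_neq0 i : b i != 0.
Proof.
have [_ hinj _] := hbas.
apply/eqP => bi0.
pose d : {ffun 'I_n -> 'F_p} := [ffun j => (j == i)%:R].
have : Fp_lincomb (p:=p) b d = Fp_lincomb (p:=p) b 0.
  rewrite lincomb0 /Fp_lincomb (bigD1 i) //= big1 ?addr0.
    by rewrite bi0 mulr0.
  by move=> j /negbTE ji; rewrite ffunE ji -[Fp_to _]/(fp 0) rmorph0 mul0r.
move=> /hinj /ffunP /(_ i); rewrite !ffunE eqxx => /eqP.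
by rewrite oner_eq0.
Qed.

Lemma root_Le_b i : root Le (b i).
Proof.
have [h1 _ _] := hbas.
have -> : b i = Fp_lincomb (p:=p) b [ffun j => (j == i)%:R].
  rewrite /Fp_lincomb (bigD1 i) //= big1 ?addr0.
    by rewrite ffunE eqxx -[Fp_to _]/(fp 1) rmorph1 mul1r.
  by move=> j /negbTE ji; rewrite ffunE ji -[Fp_to _]/(fp 0) rmorph0 mul0r.
exact: h1.
Qed.

Definition lform (c : {ffun 'I_n -> 'F_p}) : {mpoly 'F_p[n]} :=
  \sum_(i < n) (c i)%:MP_[n] * 'X_i.

Lemma lform_homog c : lform c \is 1.-homog.
Proof.
rewrite /lform; apply: (big_ind (fun q : {mpoly 'F_p[n]} => q \is 1.-homog)).
- exact: dhomog0.
- by move=> x y hx hy; apply: dhomogD.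
- by move=> i _; rewrite mul_mpolyC; apply: dhomogZ; rewrite dhomogX; apply/mdeg1P; exists i.
Qed.

Lemma ff_lform c : ff (lform c) = Fp_lincomb (p:=p) b c.
Proof.
rewrite /lform /ff rmorph_sum /=; apply: eq_bigr => i _.
by rewrite rmorphM /= -/(ff _) -/(ff _) ffC ffX.
Qed.

Lemma sym_act_homog g m : SymPow (p:=p) (n:=n) r m -> SymPow (p:=p) (n:=n) r (sym_act (p:=p) b g m).
Proof.
rewrite /SymPow /sym_act => hm.
rewrite comp_mpolyEX big_seq.
apply: (big_ind (fun q : {mpoly 'F_p[n]} => q \is r.-homog)).
- exact: dhomog0.
- by move=> x y hx hy; apply: dhomogD.
move=> a ha; apply: dhomogZ; rewrite comp_mpolyX.
have da : mdeg a = r := dhomog_mf hm ha.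
rewrite -da mdegE.
apply: (big_ind2 (fun (q : {mpoly 'F_p[n]}) (d : nat) => q \is d.-homog)).
- exact: dhomog1.
- by move=> q1 d1 q2 d2 h1 h2; apply: dhomogM.
move=> i _; rewrite tnth_mktuple.
have := dhomogMn (a i) (lform_homog (Fp_coord (p:=p) b (g (b i)))).
by rewrite mul1n.
Qed.
Lemma root_gb g i : Gs g -> root Le (g (b i)).
Proof. by move=> [s _ gs]; rewrite gs; apply: gal_root; apply: root_Le_b. Qed.

Lemma equiv g m : Gs g -> ff (sym_act (p:=p) b g m) = g (ff m).
Proof.
move=> hg; have [s _ gs] := hg.
rewrite /sym_act comp_mpolyEX /ff rmorph_sum /= gs {2}/mmap rmorph_sum /=.
apply: eq_big_seq => a ha.
rewrite mmapZ comp_mpolyX rmorphM /= gal_fix_fp; congr (_ * _).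
rewrite rmorph_prod /mmap1 rmorph_prod /=; apply: eq_bigr => i _.
rewrite rmorphXn /= rmorphXn /= tnth_mktuple; congr (_ ^+ _).
rewrite -/(ff _) -[\sum_(_ < n) _]/(lform _) ff_lform coordK; first exact: gs.
exact: root_gb.
Qed.

Lemma exists_idx : exists i0 : 'I_n, True.
Proof.
have [[m hm nz] _] := hirr.
case/boolP: [exists i : 'I_n, true] => [/existsP [i _]|/existsPn hn]; first by exists i.
case/eqP: nz; apply/mpolyP => a; rewrite mcoeff0.
apply: (dhomog_nemf_coeff hm).
have e : mdeg a = 0%N.
  rewrite mdegE big1 // => i _; by have := hn i.
by change (mdeg a != r); rewrite e eq_sym -lt0n.
Qed.

Lemma Xr_homog i : SymPow (p:=p) (n:=n) r ('X_i ^+ r).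
Proof.
have h : ('X_i : {mpoly 'F_p[n]}) \is 1.-homog.
  by rewrite dhomogX; apply/mdeg1P; exists i.
by have := dhomogMn r h; rewrite mul1n.
Qed.

Lemma Xr_neq0 i : ('X_i ^+ r : {mpoly 'F_p[n]}) != 0.
Proof.
rewrite mpolyXn; apply/eqP => /mpolyP /(_ (U_(i) *+ r)%MM).
by rewrite mcoeffX eqxx mcoeff0 => /eqP; rewrite oner_eq0.
Qed.

Lemma ff_inj m1 m2 : SymPow (p:=p) (n:=n) r m1 -> SymPow (p:=p) (n:=n) r m2 -> ff m1 = ff m2 -> m1 = m2.
Proof.
move=> h1 h2 e.
have [_ irr] := hirr.
pose U := fun m : {mpoly 'F_p[n]} => (m \is r.-homog) && (ff m == 0).
have := irr U.
case.
- by move=> m /andP [].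
- by rewrite /U dhomog0 ff0 eqxx.
- move=> x y /andP [hx /eqP fx] /andP [hy /eqP fy]; apply/andP; split; first exact: dhomogD.
  by rewrite ffD fx fy addr0.
- move=> c x /andP [hx /eqP fx]; apply/andP; split; first exact: dhomogZ.
  by rewrite ffZ fx mulr0.
- move=> g x hg /andP [hx /eqP fx]; apply/andP; split; first exact: sym_act_homog.
  have [s _ gs] := hg.
  by rewrite equiv // fx gs rmorph0.
- move=> H; apply/eqP; rewrite -subr_eq0; apply/eqP; apply: H.
  apply/andP; split; first by rewrite -scaleN1r; apply: dhomogD => //; apply: dhomogZ.
  by rewrite -scaleN1r ffD ffZ rmorphN rmorph1 mulN1r e subrr.
- move=> H; exfalso.
  have [i0 _] := exists_idx.
  have /andP [_] := H _ (Xr_homog i0).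
  by rewrite ffXn expf_eq0 (negbTE (b_neq0 i0)) andbF.
Qed.

Local Notation LPe := (map_poly (in_alg R) LP).
Local Notation Pe := (map_poly (in_alg R) P).

Lemma Le_eq : Le = 'X * (Pe \Po 'X^r).
Proof. by rewrite hLP rmorphM /= map_polyX map_comp_poly /= map_polyXn. Qed.

Lemma L_neq0 : L != 0.
Proof. by have [_ hs] := hLpd; rewrite -size_poly_eq0 hs. Qed.

Lemma P_neq0 : P != 0.
Proof. by apply/eqP => P0; move: L_neq0; rewrite hLP P0 comp_poly0 mulr0 eqxx. Qed.

Lemma root_P_br x : root Le x -> x != 0 -> root Pe (x ^+ r).
Proof.
rewrite Le_eq /root hornerM hornerX horner_comp hornerXn mulf_eq0 => /orP [/eqP->|//].
by rewrite eqxx.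
Qed.

Lemma map_ppoly {Q : {poly F}} : is_ppoly p Q -> is_ppoly p (map_poly (in_alg R) Q).
Proof.
move=> h i; rewrite coef_map /= => nz; apply: h; apply: contraNneq nz => ->.
by rewrite scale0r.
Qed.

Lemma root_LP_br x : root Le x -> root LPe (x ^+ r).
Proof.
case: (eqVneq x 0) => [->|xn hx].
  by rewrite expr0n gtn_eqF // => _; rewrite /root ppoly_horner0 ?eqxx //; exact: map_ppoly.
apply: (root_dvdp (p:=Pe)); [by rewrite dvdp_map | exact: root_P_br].
Qed.

Lemma img_root m : SymPow (p:=p) (n:=n) r m -> root LPe (ff m).
Proof.
have hLPe := map_ppoly hLPp.
have [_ irr] := hirr.
pose U := fun m : {mpoly 'F_p[n]} => (m \is r.-homog) && root LPe (ff m).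
have [i0 _] := exists_idx.
have Ui0 : U ('X_i0 ^+ r).
  by apply/andP; split; [exact: Xr_homog | rewrite ffXn; apply: root_LP_br; apply: root_Le_b].
have := irr U; case.
- by move=> x /andP [].
- by apply/andP; split; [exact: dhomog0 | rewrite ff0 /root (ppoly_horner0 hLPe)].
- move=> x y /andP [hx fx] /andP [hy fy]; apply/andP; split; first exact: dhomogD.
  by rewrite /root ffD ppoly_hornerD // (eqP fx) (eqP fy) addr0.
- move=> c x /andP [hx fx]; apply/andP; split; first exact: dhomogZ.
  by rewrite /root ffZ ppoly_horner_fp // (eqP fx) mulr0.
- move=> g x hg /andP [hx fx]; apply/andP; split; first exact: sym_act_homog.
  have [s _ gs] := hg.
  by rewrite equiv // gs; apply: gal_root.
- by move=> H; have := H _ Ui0; move/eqP; rewrite (negbTE (Xr_neq0 i0)).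
- by move=> H hm; have /andP [] := H _ hm.
Qed.

Definition mons : seq 'X_{1..n < r.+1} :=
  enum [pred a : 'X_{1..n < r.+1} | mdeg a == r].
Definition us : seq R := map (fun a : 'X_{1..n < r.+1} => ff 'X_[a]) mons.
Definition xs := greedy us.
Definition S := spanS xs.
Definition QE := QS xs.

Lemma S_img w : w \in S -> exists2 m, SymPow (p:=p) (n:=n) r m & ff m = w.
Proof.
move=> hw.
refine (@spanS_min (fun w => exists2 m, SymPow (p:=p) (n:=n) r m & ff m = w) xs _ _ _ _ w hw).
- by exists 0; [exact: dhomog0 | exact: ff0].
- move=> u v [m1 h1 <-] [m2 h2 <-]; exists (m1 + m2); last exact: ffD.
  exact: dhomogD.
- move=> c u [m1 h1 <-]; exists (c *: m1); last exact: ffZ.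
  exact: dhomogZ.
- move=> x /greedy_sub /mapP [a]; rewrite mem_enum inE => ha ->.
  by exists 'X_[a] => //; rewrite /SymPow dhomogX.
Qed.

Lemma img_S m : SymPow (p:=p) (n:=n) r m -> ff m \in S.
Proof.
move=> hm; rewrite /ff /mmap big_seq.
apply: (big_ind (fun w => w \in S)); [exact: spanS0 | by move=> u v; apply: spanS_add |].
move=> a ha; apply: spanS_scale.
have da : mdeg a = r := dhomog_mf hm ha.
have ba : (mdeg a < r.+1)%N by rewrite da.
apply: greedy_span; apply/mapP; exists (BMultinom ba).
  by rewrite mem_enum inE /= da.
by rewrite /ff mmapX.
Qed.

Lemma S_uniq : uniq S.
Proof. exact: greedy_uniq. Qed.

Lemma S_stable (s : gal_of {:R}) w : s \in ('Gal({:R} / 1%VS))%g -> w \in S -> s w \in S.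
Proof.
move=> hs /S_img [m hm <-].
rewrite -(equiv s m); last by exists s.
by apply: img_S; apply: sym_act_homog.
Qed.

Lemma galois1 : galois 1%VS {:R}.
Proof.
apply/splitting_galoisField; exists Le; split.
- by apply/polyOverP => i; rewrite coef_map /= memvZ // mem1v.
- by rewrite separable_map.
- exact: hspl.
Qed.

Lemma QE_fixed (s : gal_of {:R}) : s \in ('Gal({:R} / 1%VS))%g -> map_poly s QE = QE.
Proof.
move=> hs; rewrite /QE /QS rmorph_prod /=.
under eq_bigr do rewrite map_polyXsubC /=.
rewrite -(big_map s predT (fun w => 'X - w%:P)); apply: perm_big.
have u1 : uniq (map s S) by rewrite map_inj_uniq ?S_uniq //; apply: fmorph_inj.
have sub : {subset map s S <= S} by move=> y /mapP [w hw ->]; apply: S_stable.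
have [_ eqi] := uniq_min_size u1 sub (eq_leq (esym (size_map s S))).
exact: (uniq_perm u1 S_uniq eqi).
Qed.

Lemma QE_over1 : QE \is a polyOver 1%VS.
Proof.
have /galois_fixedField fixE := galois1.
apply/polyOverP => i; rewrite -fixE.
apply/fixedFieldP; first exact: memvf.
by move=> s hs; rewrite -coef_map QE_fixed.
Qed.

Lemma size_compXr (Q : {poly F}) : Q != 0 -> size (Q \Po 'X^r) = ((size Q).-1 * r).+1.
Proof.
move=> Qn.
have sX : size ('X^r : {poly F}) = r.+1 by rewrite size_polyXn.
have cn : Q \Po 'X^r != 0 by rewrite comp_poly_eq0 // sX ltnS.
by rewrite -[LHS]prednK ?size_comp_poly ?sX // lt0n size_poly_eq0.
Qed.

Lemma P_dvd QF : QE = map_poly (in_alg R) QF -> P %| QF.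
Proof.
move=> QFE.
have hT : L %| QF \Po 'X^r.
  rewrite -(dvdp_map (in_alg R)) map_comp_poly map_polyXn -QFE.
  have [rs hrs _] := hspl.
  rewrite (eqp_dvdl _ hrs).
  have urs : uniq rs.
    by rewrite -separable_prod_XsubC -(eqp_separable hrs) separable_map.
  apply: uniq_roots_dvdp; last by rewrite uniq_rootsE.
  apply/allP => z hz.
  have rz : root Le z by rewrite (eqp_root hrs) root_prod_XsubC.
  have zS : z ^+ r \in S.
    have <- : ff (lform (Fp_coord (p:=p) b z) ^+ r) = z ^+ r.
      by rewrite /ff rmorphXn /= -/(ff _) ff_lform coordK.
    apply: img_S; rewrite /SymPow.
    by have := dhomogMn r (lform_homog (Fp_coord (p:=p) b z)); rewrite mul1n.
  have : root QE (z ^+ r) by rewrite /QE /QS root_prod_XsubC.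
  by rewrite /root horner_comp hornerXn.
have hPr : P \Po 'X^r %| QF \Po 'X^r.
  by apply: dvdp_trans hT; rewrite hLP; exact: dvdp_mulIr.
apply/modp_eq0P.
case: (eqVneq (QF %% P) 0) => // Rn; exfalso.
have hR : P \Po 'X^r %| (QF %% P) \Po 'X^r.
  move: hPr; rewrite {1}(divp_eq QF P) comp_polyD comp_polyM dvdp_addr //.
  exact: dvdp_mull.
have Rc : (QF %% P) \Po 'X^r != 0.
  by rewrite comp_poly_eq0 // size_polyXn ltnS.
have := dvdp_leq Rc hR.
rewrite !size_compXr // ?P_neq0 // ltnS leq_pmul2r //.
have := Pdiv.CommonIdomain.ltn_modp QF P; rewrite P_neq0 => h1 h2.
have h3 : (0 < size (QF %% P)%R)%N by rewrite lt0n size_poly_eq0.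
have hP : (0 < size P)%N by rewrite lt0n size_poly_eq0 P_neq0.
move: h1; rewrite -(prednK hP) -(prednK h3) ltnS => h1.
by have := leq_ltn_trans h2 h1; rewrite ltnn.
Qed.

Lemma main : sym_iso_to (p:=p) b Gs r (fun x : R => root LPe x).
Proof.
exists ff; split.
- by move=> m1 m2 _ _; exact: ffD.
- by move=> c m _; exact: ffZ.
- exact: ff_inj.
- move=> x; split; last by move=> [m hm <-]; exact: img_root.
  move=> hx; apply: S_img.
  case: (boolP (x \in S)) => // xS; exfalso.
  have [QF QFE] := polyOver1P QE_over1.
  have QEp : is_ppoly p QE := QS_ppoly xs.
  have QFp : is_ppoly p QF.
    move=> i nz; apply: QEp; rewrite QFE coef_map /=.
    by rewrite -in_algE fmorph_eq0.
  have sQ : size QF = (size S).+1 by rewrite -(size_map_poly (in_alg R)) -QFE size_prod_XsubC.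
  have QFn : QF != 0 by rewrite -size_poly_eq0 sQ.
  have h1 := hmin QF QFp QFn (P_dvd QF QFE).
  have LPn : LPe != 0 by rewrite map_poly_eq0.
  have h2 := max_poly_roots (rs := x :: S) LPn.
  have : (size (x :: S) < size LPe)%N.
    apply: h2; last by rewrite /= xS S_uniq.
    apply/allP => y; rewrite inE => /orP [/eqP -> //|yS].
    by have [m hm <-] := S_img _ yS; exact: img_root.
  by rewrite size_map_poly /= ltnNge (leq_trans h1) // sQ.
- by move=> g m hg hm; exact: equiv.
Qed.
End Main.
End Fp.

Theorem corollary6p1 (p : nat) (F : fieldType) (E : splittingFieldType F)
    (n r : nat) (L P LP : {poly F}) (b : 'I_n -> E) :
  prime p -> p \in [pchar F] ->
  is_ppoly_of_pdeg p n L ->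
  separable_poly L ->
  splittingFieldFor 1%VS (map_poly (in_alg E) L) fullv ->
  is_Fp_basis (p:=p) b (fun x : E => root (map_poly (in_alg E) L) x) ->
  (0 < r)%N -> (r %| p.-1)%N ->
  sym_irreducible (p:=p) b
    (fun g : E -> E => exists2 s : gal_of {:E}, s \in ('Gal({:E} / 1%VS))%g & g =1 s) r ->
  L = 'X * (P \Po 'X^r) ->
  is_ppoly p LP -> LP != 0 -> P %| LP ->
  (forall Q : {poly F}, is_ppoly p Q -> Q != 0 -> P %| Q -> (size LP <= size Q)%N) ->
  sym_iso_to (p:=p) b
    (fun g : E -> E => exists2 s : gal_of {:E}, s \in ('Gal({:E} / 1%VS))%g & g =1 s) r
    (fun x : E => root (map_poly (in_alg E) LP) x).
Proof.
move=> pP chF hLpd hsep hspl hbas hr _ hirr hLP hLPp hLP0 hPLP hmin.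
have chE : p \in [pchar E] by apply: (rmorph_pchar (in_alg E)).
exact: (@main p F E pP chE n r L P LP b hLpd hsep hspl hbas hr hirr hLP hLPp hLP0 hPLP hmin).
Qed.
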